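(* Let $(A,\preccurlyeq)$ be a partially ordered set and let $U_\preccurlyeq(A)\subseteq 2^A$ be the set of up-sets of $A$, with the topology induced by the natural (product) topology on $2^A$. Then for $x\in U_\preccurlyeq(A)$ the following are equivalent: (i) $x$ is an isolated point of $U_\preccurlyeq(A)$, i.e., $x$ is not in the closure of $U_\preccurlyeq(A)-\{x\}$; (ii) $x$ is both the union of a finite (possibly empty) family of principal up-sets and the intersection of a finite (possibly empty) family of complements of principal down-sets.
   Context: An up-set is a subset $x\subseteq A$ with $a\in x$, $a\preccurlyeq b$ implying $b\in x$. The principal up-set determined by $a$ is ${\uparrow}(a)=\{b\mid b\succcurlyeq a\}$, the principal down-set is ${\downarrow}(a)=\{b\mid b\preccurlyeq a\}$; complements are taken in $A$. The natural topology on $2^A$ (the set of subsets of $A$) is the product topology of copies of the discrete space $\{0,1\}$; a subbasis is given by the sets $\{x\mid a\in x\}$ and $\{x\mid a\notin x\}$ for $a\in A$. The empty intersection is $A$ and the empty union is $\emptyset$. *)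

(* Defs.v *)
From HB Require Import structures.
From mathcomp Require Import all_boot all_order all_algebra.
From mathcomp Require Import all_classical all_reals all_analysis.
Set Implicit Arguments. Unset Strict Implicit. Unset Printing Implicit Defensive.
Import Order.TTheory.
Local Open Scope classical_set_scope.
Local Open Scope order_scope.

(* 2^A with the product topology of discrete {0,1} = bool : points are
   characteristic functions A -> bool, topology of pointwise convergence. *)
Definition powset_top (A : Type) := {ptws A -> bool}.

Definition is_upset {d : Order.disp_t} {A : porderType d} (x : A -> bool) : Prop :=
  forall a b : A, x a -> a <= b -> x b.

Definition upsets {d : Order.disp_t} (A : porderType d) : set (powset_top A) :=
  [set x | is_upset x].

Definition pup {d : Order.disp_t} {A : porderType d} (a : A) : A -> bool :=
  fun b => a <= b.
Definition pdown {d : Order.disp_t} {A : porderType d} (a : A) : A -> bool :=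
  fun b => b <= a.

Definition union_pups {d : Order.disp_t} {A : porderType d} (s : seq A) : A -> bool :=
  fun b => has (fun a => pup a b) s.

Definition inter_compl_pdowns {d : Order.disp_t} {A : porderType d} (s : seq A)
  : A -> bool :=
  fun b => all (fun a => ~~ pdown a b) s.
Arguments upsets {d} A.

(* Main.v *)
Require Import Defs.
From HB Require Import structures.
From mathcomp Require Import all_boot all_order all_algebra.
From mathcomp Require Import all_classical all_reals all_analysis.
Local Open Scope classical_set_scope.
Import Order.TTheory.

Section S.
Context (d : Order.disp_t) (A : porderType d).

Lemma nbhs_pt (x : powset_top A) (a : A) : nbhs x [set g : powset_top A | g a = x a].
Proof.
have := @proj_continuous A (fun _ => bool) a x.
move=> /(_ [set x a]) H; apply: H.
by move=> y ->.
Qed.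

Lemma cvg_pt (F : set_system (powset_top A)) (x : powset_top A) :
  Filter F -> (forall a, F [set g | g a = x a]) -> F --> x.
Proof.
move=> FF H; apply/cvg_sup => i.
have /= -> := @nbhsE (initial_topology (fun f : powset_top A => f i)) x.
move=> A0 [B [[C oC <-] Cx] BA].
rewrite nbhs_filterE; apply: filterS BA _; apply: filterS (H i) => g /= ->; exact: Cx.
Qed.

Lemma approx (x : powset_top A) (y : seq A -> powset_top A) :
  upsets A x -> ~ @closure (subspace (upsets A)) (upsets A `\ x) x ->
  (forall s, is_upset (y s)) ->
  (forall t, exists s0 : seq A, forall s : seq A, {subset s0 <= s} -> y s t = x t) ->
  exists s, y s = x.
Proof.
move=> xU ncl yup H; apply: contrapT => ney.
have {}ney s : y s <> x by move=> e; apply: ney; exists s.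
pose F : set_system (powset_top A) :=
  fun B => exists s0 : seq A, forall s : seq A, {subset s0 <= s} -> B (y s).
have FF : Filter F.
  split.
  - by exists [::].
  - move=> P Q [s0 HP] [s1 HQ]; exists (s0 ++ s1) => s sub; split.
      by apply: HP => z zs; apply: sub; rewrite mem_cat zs.
    by apply: HQ => z zs; apply: sub; rewrite mem_cat zs orbT.
  - by move=> P Q PQ [s0 HP]; exists s0 => s /HP /PQ.
have Fx : F --> x.
  apply: cvg_pt => a; have [s0 Hs0] := H a; exists s0 => s /Hs0.
  done.
apply: ncl => B nbB.
have [V nV BV] := (@nbhs_subspace_ex (powset_top A) (upsets A) B x xU).1 nbB.
have [s0 Hs0] := Fx V nV.
exists (y s0); have : (V `&` upsets A) (y s0) by split; [apply: Hs0|apply: yup].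
rewrite -BV => -[By Uy]; split => //; split => //; exact: ney.
Qed.
End S.

Theorem lemma5p1 (d : Order.disp_t) (A : porderType d) (x : powset_top A) :
  upsets A x ->
  ((~ @closure (subspace (upsets A)) (upsets A `\ x) x) <->
   ((exists s : seq A, x = union_pups s) /\
    (exists t : seq A, x = inter_compl_pdowns t))).
Proof.
move=> xU; split.
  move=> ncl; split.
    have Hu : forall s : seq A, is_upset (union_pups [seq a <- s | x a]).
      move=> s a b /hasP [c cin ca] ab; apply/hasP; exists c => //.
      rewrite /pup; exact: le_trans ca ab.
    have Hp : forall t, exists s0 : seq A, forall s : seq A, {subset s0 <= s} ->
        union_pups [seq a <- s | x a] t = x t.
      move=> t; exists [:: t] => s sub; case xt: (x t).
        apply/hasP; exists t; last by rewrite /pup lexx.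
        by rewrite mem_filter xt sub // mem_head.
      apply/negbTE/hasPn => c; rewrite mem_filter => /andP [xc _].
      rewrite /pup; apply/negP => ct; move: (xU c t xc ct); rewrite xt.
      done.
    have [s e] := @approx d A x (fun s => union_pups [seq a <- s | x a]) xU ncl Hu Hp.
    by exists [seq a <- s | x a].
  have Hu : forall s : seq A, is_upset (inter_compl_pdowns [seq a <- s | ~~ x a]).
    move=> s a b /allP H ab; apply/allP => c cin; apply/negP => bc.
    by have := H c cin; rewrite /pdown (le_trans ab bc).
  have Hp : forall t, exists s0 : seq A, forall s : seq A, {subset s0 <= s} ->
      inter_compl_pdowns [seq a <- s | ~~ x a] t = x t.
    move=> t; exists [:: t] => s sub; case xt: (x t).
      apply/allP => c; rewrite mem_filter => /andP [nxc _]; apply/negP => tc.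
      by move: (xU t c xt tc); rewrite (negbTE nxc).
    apply/negbTE/allPn; exists t; last by rewrite /pdown lexx.
    by rewrite mem_filter xt sub // mem_head.
  have [s e] := @approx d A x (fun s => inter_compl_pdowns [seq a <- s | ~~ x a]) xU ncl Hu Hp.
  by exists [seq a <- s | ~~ x a].
case=> [[s es] [t et]] ncl.
pose B := [set g : powset_top A | all (fun a => g a == x a) (s ++ t)].
have nB : nbhs x B.
  rewrite /B; elim: (s ++ t) => [|a r IH].
    have Fn : Filter (nbhs (x : powset_top A)) by apply: nbhs_filter.
    by apply: (@filterS _ _ Fn _ _ _ (@filterT _ _ Fn)).
  have Fn : Filter (nbhs (x : powset_top A)) by apply: nbhs_filter.
  have := @filterI _ _ Fn _ _ (@nbhs_pt d A x a) IH; apply: (@filterS _ _ Fn) => g [ga gr] /=.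
  by rewrite ga eqxx.
have nbB : nbhs (x : subspace (upsets A)) B.
  by apply: (@nbhs_subspace_ex (powset_top A) (upsets A) B x xU).2; exists B.
have [y [[yU nyx] By]] := ncl B nbB.
have ag a : a \in s ++ t -> y a = x a by move=> ain; move/allP: By => /(_ a ain) /eqP.
apply: nyx; apply: funext => b; case xb: (x b).
  have := xb; rewrite {1}es => /hasP [c cs cb].
  apply: (yU c b _ cb); rewrite ag ?mem_cat ?cs // es.
  by apply/hasP; exists c => //; rewrite /pup lexx.
apply/negP => yb; have := xb; rewrite {1}et => /negbT /allPn [c ct].
rewrite negbK => bc.
have := yU b c yb bc; rewrite ag ?mem_cat ?ct ?orbT // et.
by move=> /allP /(_ c ct); rewrite /pdown lexx.
Qed.
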